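(* Let $(A,\circ,[\cdot,\cdot])$ be a dual pre-Poisson algebra and $(B,\diamond,\odot)$ a pre-Poisson algebra. Define bilinear operations on $A\otimes B$ by $$(x\otimes a)\diamond_1(y\otimes b)=(x\circ y)\otimes(a\diamond b),\qquad (x\otimes a)\diamond_2(y\otimes b)=[x,y]\otimes(a\odot b),$$ for $x,y\in A$, $a,b\in B$. Then $(A\otimes B,\diamond_1)$ and $(A\otimes B,\diamond_2)$ are pre-Lie algebras, $(A\otimes B,\diamond_1,\diamond_2)$ is a compatible pre-Lie algebra, and $(A\otimes B,\{\cdot,\cdot\}_1,\{\cdot,\cdot\}_2)$ with $\{X,Y\}_k=X\diamond_k Y-Y\diamond_k X$ ($k=1,2$) is a compatible Lie algebra.
   Context: Field $\mathbb{F}$ of characteristic $0$. A dual pre-Poisson algebra: $x\circ(y\circ z)=(x\circ y)\circ z=(y\circ x)\circ z$; $[x,[y,z]]=[[x,y],z]+[y,[x,z]]$; $[x,y\circ z]=[x,y]\circ z+y\circ[x,z]$; $[x\circ y,z]=x\circ[y,z]+y\circ[x,z]$; $[x,y]\circ z=-[y,x]\circ z$. A pre-Lie algebra $(A,\diamond)$: $x\diamond(y\diamond z)-(x\diamond y)\diamond z=y\diamond(x\diamond z)-(y\diamond x)\diamond z$. A pre-Poisson algebra $(B,\diamond,\odot)$: $(B,\diamond)$ pre-Lie; $(B,\odot)$ Zinbiel, i.e. $x\odot(y\odot z)=(x\odot y+y\odot x)\odot z$; and $(x\diamond y-y\diamond x)\odot z=x\diamond(y\odot z)-y\odot(x\diamond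 z)$, $(x\odot y+y\odot x)\diamond z=x\odot(y\diamond z)+y\odot(x\diamond z)$. A compatible pre-Lie algebra $(A,\diamond,\diamond')$ consists of two pre-Lie products such that $k_1\,x\diamond y+k_2\,x\diamond' y$ is a pre-Lie product for all $k_1,k_2\in\mathbb{F}$. A compatible Lie algebra $(A,\{\cdot,\cdot\},\{\cdot,\cdot\}')$ consists of two Lie brackets such that $k_1\{\cdot,\cdot\}+k_2\{\cdot,\cdot\}'$ is a Lie bracket for all $k_1,k_2\in\mathbb{F}$. *)

(* Defs.v *)
From HB Require Import structures.
From mathcomp Require Import all_boot all_order all_algebra.
Set Implicit Arguments. Unset Strict Implicit. Unset Printing Implicit Defensive.
Import GRing.Theory.
Local Open Scope ring_scope.

Section Defs.
Variable F : fieldType.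

Definition bilinear_map (U V W : lmodType F) (f : U -> V -> W) : Prop :=
  (forall (k : F) (x x' : U) (y : V), f (k *: x + x') y = k *: f x y + f x' y) /\
  (forall (k : F) (x : U) (y y' : V), f x (k *: y + y') = k *: f x y + f x y').

Definition linear_map (U W : lmodType F) (g : U -> W) : Prop :=
  forall (k : F) (u v : U), g (k *: u + v) = k *: g u + g v.

Definition is_tensor_product (A B T : lmodType F) (tens : A -> B -> T) : Prop :=
  [/\ bilinear_map tens,
      (forall t : T, exists s : seq (A * B), t = \sum_(p <- s) tens p.1 p.2) &
      (forall (W : lmodType F) (f : A -> B -> W), bilinear_map f ->
         exists! g : T -> W, linear_map g /\ forall x a, g (tens x a) = f x a)].

Definition dual_pre_poisson (A : lmodType F) (circ br : A -> A -> A) : Prop :=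
  bilinear_map circ /\ bilinear_map br /\
  (forall x y z, circ x (circ y z) = circ (circ x y) z) /\
  (forall x y z, circ (circ x y) z = circ (circ y x) z) /\
  (forall x y z, br x (br y z) = br (br x y) z + br y (br x z)) /\
  (forall x y z, br x (circ y z) = circ (br x y) z + circ y (br x z)) /\
  (forall x y z, br (circ x y) z = circ x (br y z) + circ y (br x z)) /\
  (forall x y z, circ (br x y) z = - circ (br y x) z).

Definition is_prelie (A : lmodType F) (d : A -> A -> A) : Prop :=
  bilinear_map d /\
  forall x y z, d x (d y z) - d (d x y) z = d y (d x z) - d (d y x) z.

Definition is_zinbiel (A : lmodType F) (o : A -> A -> A) : Prop :=
  bilinear_map o /\ forall x y z, o x (o y z) = o (o x y + o y x) z.

Definition pre_poisson (B : lmodType F) (dia odot : B -> B -> B) : Prop :=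
  [/\ is_prelie dia, is_zinbiel odot,
      (forall x y z, odot (dia x y - dia y x) z = dia x (odot y z) - odot y (dia x z)) &
      (forall x y z, dia (odot x y + odot y x) z = odot x (dia y z) + odot y (dia x z))].

Definition compatible_prelie (A : lmodType F) (d1 d2 : A -> A -> A) : Prop :=
  [/\ is_prelie d1, is_prelie d2 &
      forall k1 k2 : F, is_prelie (fun x y => k1 *: d1 x y + k2 *: d2 x y)].

Definition is_lie (A : lmodType F) (b : A -> A -> A) : Prop :=
  [/\ bilinear_map b, (forall x, b x x = 0) &
      (forall x y z, b x (b y z) + b y (b z x) + b z (b x y) = 0)].

Definition compatible_lie (A : lmodType F) (b1 b2 : A -> A -> A) : Prop :=
  [/\ is_lie b1, is_lie b2 &
      forall k1 k2 : F, is_lie (fun x y => k1 *: b1 x y + k2 *: b2 x y)].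

Definition commutator (A : lmodType F) (d : A -> A -> A) : A -> A -> A :=
  fun x y => d x y - d y x.

End Defs.

(* Main.v *)
Require Import Defs.
From Stdlib Require Import FunctionalExtensionality.
From HB Require Import structures.
From mathcomp Require Import all_boot all_order all_algebra.
Import GRing.Theory.
Set Implicit Arguments. Unset Strict Implicit. Unset Printing Implicit Defensive.
Local Open Scope ring_scope.
Section S.
Variable F : fieldType.
Definition adF (U V : zmodType) (f : U -> V) := forall x y, f (x + y) = f x + f y.

Lemma adF0 (U V : zmodType) (f : U -> V) : adF f -> f 0 = 0.
Proof. move=> h; apply: (@addrI _ (f 0)); by rewrite -h !addr0. Qed.

Lemma adF_sum (U V : zmodType) (f : U -> V) (I : Type) (s : seq I) (h : I -> U) :
  adF f -> f (\sum_(i <- s) h i) = \sum_(i <- s) f (h i).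
Proof. move=> hf; apply: (big_morph f hf (adF0 hf)). Qed.

Lemma adFB (U V : zmodType) (f g : U -> V) : adF f -> adF g -> adF (fun x => f x - g x).
Proof. by move=> hf hg x y; rewrite hf hg opprD addrACA. Qed.
Lemma adFD (U V : zmodType) (f g : U -> V) : adF f -> adF g -> adF (fun x => f x + g x).
Proof. by move=> hf hg x y; rewrite hf hg addrACA. Qed.
Lemma adF_comp (U V W : zmodType) (f : V -> W) (g : U -> V) : adF f -> adF g -> adF (fun x => f (g x)).
Proof. by move=> hf hg x y; rewrite hg hf. Qed.
Lemma adFZ (U : zmodType) (V : lmodType F) (k : F) (f : U -> V) : adF f -> adF (fun x => k *: f x).
Proof. by move=> hf x y; rewrite hf scalerDr. Qed.

Lemma span_eq (A B T V : lmodType F) (tens : A -> B -> T)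
  (hs : forall t : T, exists s : seq (A * B), t = \sum_(p <- s) tens p.1 p.2)
  (f g : T -> V) : adF f -> adF g -> (forall x a, f (tens x a) = g (tens x a)) ->
  forall t, f t = g t.
Proof.
move=> hf hg h t; have [s ->] := hs t.
by rewrite (adF_sum _ _ hf) (adF_sum _ _ hg); apply: eq_bigr => p _.
Qed.

Lemma tri_eq (A B T V : lmodType F) (tens : A -> B -> T)
  (hs : forall t : T, exists s : seq (A * B), t = \sum_(p <- s) tens p.1 p.2)
  (E1 E2 : T -> T -> T -> V) :
  (forall y z, adF (fun x => E1 x y z)) -> (forall y z, adF (fun x => E2 x y z)) ->
  (forall x z, adF (fun y => E1 x y z)) -> (forall x z, adF (fun y => E2 x y z)) ->
  (forall x y, adF (fun z => E1 x y z)) -> (forall x y, adF (fun z => E2 x y z)) ->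
  (forall x a y b z c, E1 (tens x a) (tens y b) (tens z c) = E2 (tens x a) (tens y b) (tens z c)) ->
  forall x y z, E1 x y z = E2 x y z.
Proof.
move=> h1 h2 h3 h4 h5 h6 hp X Y Z.
have s1 : forall x a y b Z0, E1 (tens x a) (tens y b) Z0 = E2 (tens x a) (tens y b) Z0.
  by move=> x a y b; apply: (span_eq hs (h5 _ _) (h6 _ _)); apply: hp.
have s2 : forall x a Y0 Z0, E1 (tens x a) Y0 Z0 = E2 (tens x a) Y0 Z0.
  by move=> x a Y0 Z'; apply: (span_eq hs (h3 _ Z') (h4 _ Z')) => y b; apply: s1.
by apply: (span_eq hs (h1 Y Z) (h2 Y Z)) => x a; apply: s2.
Qed.

Section Bil.
Variables (U V W : lmodType F) (f : U -> V -> W) (hf : bilinear_map f).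
Lemma bDl x x' y : f (x + x') y = f x y + f x' y.
Proof. by have := (proj1 hf) 1 x x' y; rewrite !scale1r. Qed.
Lemma bDr x y y' : f x (y + y') = f x y + f x y'.
Proof. by have := (proj2 hf) 1 x y y'; rewrite !scale1r. Qed.
Lemma adF_l y : adF (fun x => f x y). Proof. by move=> x x'; apply: bDl. Qed.
Lemma adF_r x : adF (fun y => f x y). Proof. by move=> y y'; apply: bDr. Qed.
Lemma b0l y : f 0 y = 0. Proof. exact: (adF0 (adF_l y)). Qed.
Lemma b0r x : f x 0 = 0. Proof. exact: (adF0 (adF_r x)). Qed.
Lemma bZl k x y : f (k *: x) y = k *: f x y.
Proof. by have := (proj1 hf) k x 0 y; rewrite addr0 b0l addr0. Qed.
Lemma bZr k x y : f x (k *: y) = k *: f x y.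
Proof. by have := (proj2 hf) k x y 0; rewrite addr0 b0r addr0. Qed.
Lemma bNl x y : f (- x) y = - f x y.
Proof. by rewrite -scaleN1r bZl scaleN1r. Qed.
Lemma bNr x y : f x (- y) = - f x y.
Proof. by rewrite -scaleN1r bZr scaleN1r. Qed.
Lemma bBl x x' y : f (x - x') y = f x y - f x' y.
Proof. by rewrite bDl bNl. Qed.
Lemma bBr x y y' : f x (y - y') = f x y - f x y'.
Proof. by rewrite bDr bNr. Qed.
End Bil.

Notation ACp s := ((@GRing.add _).[ACl s]).
Lemma zl1 (V : zmodType) (w x y z : V) : w - x = y - z -> y - w = z - x.
Proof. move=> h; rewrite -[y](subrK z) -h ?addrA. by rewrite [LHS](ACp (1*4*3*2)) subrr add0r. Qed.
Lemma zl2 (V : zmodType) (w x y z : V) : w - x = y - z -> z - x = y - w.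
Proof. move=> h; rewrite -[y](subrK z) -h ?addrA. by rewrite [RHS](ACp (1*4*3*2)) subrr add0r. Qed.
Lemma zl3 (V : zmodType) (w x y z : V) : w + x = y + z -> y - w = -(z - x).
Proof. move=> h; rewrite -[y](addrK z) -h ?opprD ?opprK ?addrA. by rewrite [LHS](ACp (1*4*3*2)) subrr add0r. Qed.
Lemma expD (V : lmodType F) (k1 k2 : F) (a b c e a' b' c' e' : V) :
  k1*:(k1*:a + k2*:b) + k2*:(k1*:c + k2*:e) - (k1*:(k1*:a' + k2*:b') + k2*:(k1*:c' + k2*:e'))
  = (k1*k1)*:(a - a') + (k1*k2)*:(b + c - b' - c') + (k2*k2)*:(e - e').
Proof.
rewrite !scalerDr !scalerA ![k2 * k1]mulrC ?scalerDr ?scalerBr ?scalerDr !opprD !addrA !scalerN.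
by rewrite [LHS](ACp (1*5*2*3*6*7*4*8)).
Qed.
Lemma linD (V : lmodType F) (k k1 k2 : F) (a a' b b' : V) :
  k1*:(k*:a + a') + k2*:(k*:b + b') = k*:(k1*:a + k2*:b) + (k1*:a' + k2*:b').
Proof. rewrite !scalerDr !scalerA ![k1 * k]mulrC ![k2 * k]mulrC !addrA.
by rewrite [LHS](ACp (1*3*2*4)). Qed.
Lemma combB (V : lmodType F) (k1 k2 : F) (a b c e : V) :
  k1*:(a - b) + k2*:(c - e) = (k1*:a + k2*:c) - (k1*:b + k2*:e).
Proof. by rewrite !scalerBr opprD addrACA. Qed.
Lemma combL (V : lmodType F) (k : F) (a b c e : V) :
  (k*:a + b) - (k*:c + e) = k*:(a - c) + (b - e).
Proof. by rewrite scalerBr opprD addrACA. Qed.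

Lemma jacAC (V : zmodType) (p1 p2 p3 p4 q1 q2 q3 q4 r1 r2 r3 r4 : V) :
 (p1 - p2) - (p3 - p4) + ((q1 - q2) - (q3 - q4)) + ((r1 - r2) - (r3 - r4)) =
 (p1 - r3 - (q2 - r4)) + (q1 - p3 - (r2 - p4)) + (r1 - q3 - (p2 - q4)).
Proof.
rewrite !opprD !opprK !addrA.
by rewrite [LHS](ACl (1*11*6*12*5*3*10*4*9*7*2*8)).
Qed.

Lemma prelie_lie (T : lmodType F) (d : T -> T -> T) : is_prelie d -> is_lie (commutator d).
Proof.
case=> hb hp; split.
- split=> [k x x' y | k x y y']; rewrite /commutator.
  + by rewrite (proj1 hb) (proj2 hb) combL.
  + by rewrite (proj1 hb) (proj2 hb) combL.
- by move=> x; rewrite /commutator subrr.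
- move=> x y z; rewrite /commutator !(bBl hb) !(bBr hb) jacAC.
  by rewrite (hp x y z) (hp y z x) (hp z x y) !subrr !addr0.
Qed.

Lemma L1 (A B T : lmodType F) (tens : A -> B -> T) : bilinear_map tens ->
  forall P Q R a1 a2 a3 a4, tens P a1 + tens (R + Q) a2 - tens R a3 - tens (P + Q) a4
   = tens P (a1 - a4) + tens Q (a2 - a4) + tens R (a2 - a3).
Proof.
move=> hf P Q R a1 a2 a3 a4; rewrite !(bDl hf) !(bBr hf) !opprD !addrA.
by rewrite [LHS](ACp (1*5*3*6*2*4)).
Qed.

Lemma adF_ll (T : lmodType F) (d d' : T -> T -> T) : bilinear_map d -> bilinear_map d' ->
  forall y z, adF (fun x => d (d' x y) z).
Proof. by move=> h h' y z x x'; rewrite (bDl h') (bDl h). Qed.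
Lemma adF_lr (T : lmodType F) (d d' : T -> T -> T) : bilinear_map d -> bilinear_map d' ->
  forall y z, adF (fun x => d (d' y x) z).
Proof. by move=> h h' y z x x'; rewrite (bDr h') (bDl h). Qed.
Lemma adF_rl (T : lmodType F) (d d' : T -> T -> T) : bilinear_map d -> bilinear_map d' ->
  forall y z, adF (fun x => d y (d' x z)).
Proof. by move=> h h' y z x x'; rewrite (bDl h') (bDr h). Qed.
Lemma adF_rr (T : lmodType F) (d d' : T -> T -> T) : bilinear_map d -> bilinear_map d' ->
  forall y z, adF (fun x => d y (d' z x)).
Proof. by move=> h h' y z x x'; rewrite (bDr h') (bDr h). Qed.
End S.

Notation ACp s := ((@GRing.add _).[ACl s]).

Ltac sadd1 h1 h2 := first [ exact: (adF_l h1 _)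
  | exact: (adF_l h2 _)
  | exact: (adF_r h1 _)
  | exact: (adF_r h2 _)
  | exact: (adF_ll h1 h1 _ _)
  | exact: (adF_ll h1 h2 _ _)
  | exact: (adF_ll h2 h1 _ _)
  | exact: (adF_ll h2 h2 _ _)
  | exact: (adF_lr h1 h1 _ _)
  | exact: (adF_lr h1 h2 _ _)
  | exact: (adF_lr h2 h1 _ _)
  | exact: (adF_lr h2 h2 _ _)
  | exact: (adF_rl h1 h1 _ _)
  | exact: (adF_rl h1 h2 _ _)
  | exact: (adF_rl h2 h1 _ _)
  | exact: (adF_rl h2 h2 _ _)
  | exact: (adF_rr h1 h1 _ _)
  | exact: (adF_rr h1 h2 _ _)
  | exact: (adF_rr h2 h1 _ _)
  | exact: (adF_rr h2 h2 _ _) ].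
Ltac sadd h1 h2 := move=> ? ?; cbv beta; repeat (first [apply: adFB | apply: adFD | apply: adFZ]); sadd1 h1 h2.

Theorem proposition2p20 (F : fieldType) (charF0 : [pchar F] =i pred0)
  (A B T : lmodType F) (circ br : A -> A -> A) (dia odot : B -> B -> B)
  (tens : A -> B -> T) (d1 d2 : T -> T -> T) :
  dual_pre_poisson circ br ->
  pre_poisson dia odot ->
  is_tensor_product tens ->
  bilinear_map d1 -> bilinear_map d2 ->
  (forall x y a b, d1 (tens x a) (tens y b) = tens (circ x y) (dia a b)) ->
  (forall x y a b, d2 (tens x a) (tens y b) = tens (br x y) (odot a b)) ->
  [/\ is_prelie d1, is_prelie d2, compatible_prelie d1 d2 &
      compatible_lie (commutator d1) (commutator d2)].
Proof.
move=> hA hB [tb hs _] b1 b2 e1 e2.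
case: hA => cb [bb [cA [cC [bJ [bL [bR bS]]]]]].
case: hB => [[db dP] [ob oZ] pp1 pp2].
have bN : forall x y z, br (br y x) z = - br (br x y) z.
  move=> x y z; have := bJ x y z; rewrite (bJ y x z) addrA => h.
  have h' : br (br x y) z + br (br y x) z = 0.
    by apply: (@addIr _ (br x (br y z))); rewrite add0r -h.
  by apply/eqP; rewrite -addr_eq0 addrC h'.
have pre1 : is_prelie d1.
  split => //.
  apply: (tri_eq hs (E1 := fun x y z => d1 x (d1 y z) - d1 (d1 x y) z)
                    (E2 := fun x y z => d1 y (d1 x z) - d1 (d1 y x) z)); try sadd b1 b2.
  move=> x a y b z c /=; rewrite !e1 !cA [circ (circ y x) z]cC -!(bBr tb).
  by rewrite dP.
have pre2 : is_prelie d2.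
  split => //.
  apply: (tri_eq hs (E1 := fun x y z => d2 x (d2 y z) - d2 (d2 x y) z)
                    (E2 := fun x y z => d2 y (d2 x z) - d2 (d2 y x) z)); try sadd b1 b2.
  move=> x a y b z c /=; rewrite !e2 (bN x y z) (bJ x y z) !oZ.
  rewrite !(bDl ob) !(bNl tb) !(bDl tb) !(bDr tb).
  by rewrite opprK !addrA [LHS](ACp (1*5*4*3*2)) subrr add0r.
pose c X Y Z := d1 X (d2 Y Z) + d2 X (d1 Y Z) - d1 (d2 X Y) Z - d2 (d1 X Y) Z.
have cross : forall X Y Z, c X Y Z = c Y X Z.
  apply: (tri_eq hs (E1 := fun x y z => c x y z) (E2 := fun x y z => c y x z)); rewrite /c; try sadd b1 b2.
  move=> x a y b z c0 /=; rewrite !e1 !e2 !e1 (bL x y z) (bR x y z) (bL y x z) (bR y x z).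
  rewrite !(L1 tb) (bS y x z) (bNl tb) -(bNr tb) [RHS](ACp (2*1*3)).
  congr (_ + _ + _); congr (tens _ _).
  - by apply: zl1; have := pp1 a b c0; rewrite (bBl ob).
  - by apply: zl2; have := pp1 b a c0; rewrite (bBl ob).
  - by apply: zl3; have := pp2 a b c0; rewrite (bDl db).
have combo : forall k1 k2 : F, is_prelie (fun x y => k1 *: d1 x y + k2 *: d2 x y).
  move=> k1 k2; split.
    split=> [k x x' y | k x y y'] /=.
      by rewrite (proj1 b1) (proj1 b2) linD.
    by rewrite (proj2 b1) (proj2 b2) linD.
  move=> x y z /=.
  rewrite !(bDr b1) !(bZr b1) !(bDr b2) !(bZr b2) !(bDl b1) !(bZl b1) !(bDl b2) !(bZl b2).
  rewrite !expD.
  have := cross x y z; rewrite /c => ->.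
  by rewrite (proj2 pre1) (proj2 pre2).
have cp : compatible_prelie d1 d2 by constructor.
have cl : compatible_lie (commutator d1) (commutator d2).
  constructor; [exact: prelie_lie pre1 | exact: prelie_lie pre2 | move=> k1 k2].
  have -> : (fun x y => k1 *: commutator d1 x y + k2 *: commutator d2 x y)
     = commutator (fun x y => k1 *: d1 x y + k2 *: d2 x y).
    by apply: functional_extensionality => x; apply: functional_extensionality => y;
       rewrite /commutator combB.
  exact: prelie_lie (combo k1 k2).
by constructor.
Qed.
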